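(* Let $n$ be a positive integer and let $G$ be a pure $(2n)$-sparse gapset of genus $g=3n+1$ with multiplicity $m$. If $G$ is symmetric, then $m=2n$.
   Context: A gapset is a finite set $G\subset\mathbb{N}=\{1,2,\dots\}$ such that whenever $z\in G$ and $z=x+y$ with $x,y\in\mathbb{N}$, then $x\in G$ or $y\in G$; its genus is $g=\#G$. Writing $G=\{\ell_1<\dots<\ell_g\}$, multiplicity $m(G)=\min\{s\in\mathbb{N}:s\notin G\}$, Frobenius number $F(G)=\ell_g$; $G$ is symmetric if $F(G)=2g-1$. $G$ is pure $\kappa$-sparse if $\ell_{i+1}-\ell_i\le\kappa$ for all $i$ with equality for some $i$. *)

(* Defs.v *)
From mathcomp Require Import all_boot.
Set Implicit Arguments. Unset Strict Implicit. Unset Printing Implicit Defensive.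

Definition is_gapset (G : seq nat) : Prop :=
  uniq G /\ (forall z, z \in G -> 0 < z) /\
  (forall z x y, z \in G -> 0 < x -> 0 < y -> z = x + y -> x \in G \/ y \in G).

Definition genus (G : seq nat) : nat := size G.

(* sorted elements ell_1 < ... < ell_g, 0-indexed: ell i = nth 0 (sort leq G) i *)
Definition ell (G : seq nat) (i : nat) : nat := nth 0 (sort leq G) i.

Definition frobenius (G : seq nat) : nat := \max_(x <- G) x.

Lemma ex_nongap (G : seq nat) : exists s, (0 < s) && (s \notin G).
Proof.
exists (\max_(x <- G) x).+1; apply/andP; split => //.
apply/negP => h.
have := @leq_bigmax_seq nat G (fun _ => true) (fun x => x) _ h isT.
by rewrite ltnn.
Qed.

Definition multiplicity (G : seq nat) : nat := ex_minn (ex_nongap G).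

Definition symmetric_gapset (G : seq nat) : Prop := frobenius G = 2 * genus G - 1.

Definition pure_sparse (kappa : nat) (G : seq nat) : Prop :=
  (forall i, i.+1 < genus G -> ell G i.+1 - ell G i <= kappa) /\
  (exists i, i.+1 < genus G /\ ell G i.+1 - ell G i = kappa).

(* Main.v *)
Require Import Defs.
From mathcomp Require Import all_boot.
From mathcomp Require Import zify.

Lemma ell_mem G i : i < size G -> ell G i \in G.
Proof. by move=> h; rewrite /ell -(mem_sort leq) mem_nth // size_sort. Qed.

Lemma ell_mono {G i j} : i <= j -> j < size G -> ell G i <= ell G j.
Proof.
move=> hij hj; rewrite /ell.
apply: (sorted_leq_nth leq_trans leqnn 0 (sort_sorted leq_total G)) => //;
  rewrite inE size_sort //; exact: leq_ltn_trans hj.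
Qed.

Lemma ell_index {G z} : z \in G -> exists i, i < size G /\ ell G i = z.
Proof.
move=> hz; exists (index z (sort leq G)); split.
  by rewrite -(size_sort leq) index_mem mem_sort.
by rewrite /ell nth_index // mem_sort.
Qed.

Lemma max_mem (G : seq nat) : G != [::] -> \max_(x <- G) x \in G.
Proof.
elim: G => // a s IH _; rewrite big_cons.
case: s IH => [|b s] IH; first by rewrite big_nil maxn0 mem_head.
have hM := IH isT; rewrite /maxn; case: ifP => _.
  by rewrite inE hM orbT.
by rewrite mem_head.
Qed.

Lemma le_frob G z : z \in G -> z <= frobenius G.
Proof. move=> h; exact: (@leq_bigmax_seq nat G (fun _ => true) (fun x => x) _ h isT). Qed.

Theorem mainTheorem11 (n : nat) (G : seq nat) :
  0 < n -> is_gapset G -> pure_sparse (2 * n) G -> genus G = 3 * n + 1 ->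
  symmetric_gapset G -> multiplicity G = 2 * n.
Proof.
move=> n0 [uG [posG gapG]] [spar [i [hi heq]]] hg hsym.
rewrite /symmetric_gapset hg in hsym.
rewrite hg in spar hi.
have hs : size G = 3 * n + 1 := hg.
have FG : frobenius G \in G.
  apply: max_mem; apply/eqP => e; move: hg; rewrite /genus e /=; lia.
set F := frobenius G in FG hsym.
have hF : F = 6 * n + 1 by lia.
rewrite /multiplicity; case: ex_minnP => m /andP[m0 mG] mmin.
have lowG : forall k, 0 < k -> k < m -> k \in G.
  move=> k k0 km; apply/negPn/negP => kG.
  have := mmin k; rewrite k0 kG => /(_ isT); lia.
case: (ltngtP m (2 * n)) => // hm.
-
  exfalso.
  set a := ell G i in heq; set b := ell G i.+1 in heq.
  have bG : b \in G by apply: ell_mem; rewrite hs.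
  have hi' : i < size G by rewrite hs; lia.
  have xnG : b - m \notin G.
    apply/negP => /ell_index [j [hj ej]].
    case: (leqP j i) => hji.
      have := ell_mono hji hi'; rewrite ej -/a; lia.
    have := ell_mono hji hj; rewrite ej -/b; lia.
  have := gapG b (b - m) m bG; case.
  + lia.
  + done.
  + lia.
  + by rewrite (negPf xnG).
  + by rewrite (negPf mG).
-
  exfalso.
  have oneG : 1 \in G by apply: lowG => //; lia.
  have [y [yG [y1 y2]]] : exists y, y \in G /\ F - 2 * n <= y /\ y < F.
    have [k [hk ek]] := ell_index FG.
    have [j [hj ej]] := ell_index oneG.
    case: k hk ek => [|k] hk ek.
      have := ell_mono (leq0n j) hj; rewrite ek ej; lia.
    exists (ell G k); split; first by apply: ell_mem; exact: ltnW.
    have hmo := ell_mono (leqnSn k) hk.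
    move: hk; rewrite hs => hk; have hsp := spar k hk.
    split; first lia.
    rewrite ltn_neqAle -ek hmo andbT.
    apply/eqP => e.
    have := uG; rewrite -(sort_uniq leq) => us.
    have := nth_uniq 0 (_ : k < size (sort leq G)) (_ : k.+1 < size (sort leq G)) us.
    rewrite size_sort hs; move/(_ (ltnW hk) hk).
    rewrite -/(ell G k) -/(ell G k.+1) e eqxx => /esym /eqP; lia.
  set y0 := F - y.
  have y0G : y0 \in G by apply: lowG; lia.
  pose pick x := if F - x \in G then F - x else x.
  have pickG : forall x, x < 3 * n + 1 -> pick x \in G.
    move=> x hx; rewrite /pick; case: ifP => // hFx.
    case: (posnP x) => [x0|xpos].
      by move: hFx; rewrite x0 subn0 FG.
    apply/negPn/negP => xG.
    have := gapG F x (F - x) FG xpos; case; [lia|lia| |].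
    + by rewrite (negPf xG).
    + by rewrite hFx.
  have pick_inj : {in iota 0 (3 * n + 1) &, injective pick}.
    move=> x x'; rewrite !mem_iota /= !add0n => hx hx'.
    rewrite /pick; case: ifP => _; case: ifP => _; lia.
  have : size (y0 :: map pick (iota 0 (3 * n + 1))) <= size G.
    apply: uniq_leq_size.
      rewrite /= map_inj_in_uniq // iota_uniq andbT.
      apply/mapP => [[x]]; rewrite mem_iota add0n => /andP[_ hx].
      rewrite /pick; case: ifP => hFx.
        lia.
      move=> e; move: hFx; rewrite -e /y0.
      have -> : F - (F - y) = y by lia.
      by rewrite yG.
    move=> z; rewrite inE => /orP[/eqP -> //|/mapP [x]].
    by rewrite mem_iota add0n => /andP[_ hx] ->; apply: pickG.
  by rewrite /= size_map size_iota hs; lia.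
Qed.
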